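(* Let $0<\gamma<2$, $\gamma\ne 4/3$, let $\chi\in C^3(\mathbb{R})$ with $\chi>0$, and let $\phi_1$ satisfy $\chi'(\phi_1)=0$. Set $\Delta_1=(\gamma-2)/4$ and $\Delta_2=(4-3\gamma)/6$. Then: (a) $(x,y,z,\phi)=(0,0,1,\phi_1)$ is an equilibrium of system $(\ast)$, and the linearization of $(\ast)$ there has eigenvalues $\gamma/2,\ \gamma,\ \Delta_1\pm\sqrt{\Delta_1^2+\Delta_2\,\chi''(\phi_1)/\chi(\phi_1)}$. (b) For the planar system $y'=\tfrac12(1-y^2)\Big(y(\gamma-2)+\frac{4-3\gamma}{\sqrt6}\frac{\chi'(\phi)}{\chi(\phi)}\Big)$, $\phi'=\sqrt{2/3}\,y$ (the restriction of $(\ast)$ to $x=0$, $y^2+z^2=1$), the equilibrium $(y,\phi)=(0,\phi_1)$ has linearization eigenvalues $\Delta_1\pm\sqrt{\Delta_1^2+\Delta_2\chi''(\phi_1)/\chi(\phi_1)}$, and it is: a stable focus if either $0<\gamma<4/3$ and $\chi''(\phi_1)<-\Delta_1^2\chi(\phi_1)/\Delta_2$, or $4/3<\gamma<2$ and $\chi''(\phi_1)>-\Delta_1^2\chi(\phi_1)/\Delta_2$; a stable node if either $0<\gamma<4/3$ and $-\Delta_1^2\chi(\phi_1)/\Delta_2\le\chi''(\phi_1)<0$, or $4/3<\gamma<2$ and $0<\chi''(\phi_1)\le-\Delta_1^2\chi(\phi_1)/\Delta_2$; a saddle if either $0<\gamma<4/3$ and $\chi''(\phi_1)>0$, or $4/3<\gamma<2$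 and $\chi''(\phi_1)<0$; and non-hyperbolic if $\chi''(\phi_1)=0$.
   Context: System $(\ast)$ (prime $=d/d\tau$): $x'=\tfrac12 x(2y^2+\gamma z^2)$; $y'=y^3+\tfrac12(\gamma z^2-2)y-\frac{x^2V'(\phi)}{3\sqrt6}+\frac{(4-3\gamma)z^2}{2\sqrt6}\frac{\chi'(\phi)}{\chi(\phi)}$; $z'=\tfrac12 z(2y^2+(z^2-1)\gamma)-\frac{(4-3\gamma)yz}{2\sqrt6}\frac{\chi'(\phi)}{\chi(\phi)}$; $\phi'=\sqrt{2/3}\,y$, where $V\in C^3$, $V\ge0$. Eigenvalues in (a) refer to the Jacobian of the vector field at the point (with the $z$-direction understood as the direction normal to the circle $y^2+z^2=1$ within the constraint surface). *)

(* Defs.v *)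
From Stdlib Require Import Reals Lra Lia.
Open Scope R_scope.

Definition C3 (f f1 f2 f3 : R -> R) : Prop :=
  (forall t, derivable_pt_lim f t (f1 t)) /\
  (forall t, derivable_pt_lim f1 t (f2 t)) /\
  (forall t, derivable_pt_lim f2 t (f3 t)) /\
  continuity f3.

(** Points of R^n are represented as nat -> R, only indices < n matter. *)
Fixpoint fsum (n : nat) (f : nat -> R) : R :=
  match n with O => 0 | S k => fsum k f + f k end.

Definition upd (p : nat -> R) (j : nat) (t : R) : nat -> R :=
  fun k => if Nat.eqb k j then t else p k.

Definition is_jacobian (n : nat) (F : (nat -> R) -> (nat -> R))
  (p : nat -> R) (J : nat -> nat -> R) : Prop :=
  forall i j, (i < n)%nat -> (j < n)%nat ->
    derivable_pt_lim (fun t => F (upd p j t) i) (p j) (J i j).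

(** a + i b is a (complex) eigenvalue of the real n x n matrix J:
    there is a nonzero complex vector u + i w with J (u+iw) = (a+ib)(u+iw). *)
Definition is_ceig (n : nat) (J : nat -> nat -> R) (a b : R) : Prop :=
  exists u w : nat -> R,
    (exists k, (k < n)%nat /\ (u k <> 0 \/ w k <> 0)) /\
    forall i, (i < n)%nat ->
      fsum n (fun j => J i j * u j) = a * u i - b * w i /\
      fsum n (fun j => J i j * w j) = b * u i + a * w i.

Definition equilibrium (n : nat) (F : (nat -> R) -> (nat -> R)) (p : nat -> R) :=
  forall i, (i < n)%nat -> F p i = 0.

(** principal complex square root of a real number, as (Re, Im) *)
Definition csqrt (D : R) : R * R :=
  if Rle_dec 0 D then (sqrt D, 0) else (0, sqrt (- D)).

Definition stable_focus n F p : Prop :=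
  equilibrium n F p /\ exists J, is_jacobian n F p J /\
    (forall a b, is_ceig n J a b -> a < 0) /\
    (exists a b, is_ceig n J a b /\ b <> 0).

Definition stable_node n F p : Prop :=
  equilibrium n F p /\ exists J, is_jacobian n F p J /\
    (forall a b, is_ceig n J a b -> b = 0 /\ a < 0).

Definition saddle n F p : Prop :=
  equilibrium n F p /\ exists J, is_jacobian n F p J /\
    (forall a b, is_ceig n J a b -> b = 0 /\ a <> 0) /\
    (exists a, is_ceig n J a 0 /\ 0 < a) /\
    (exists a, is_ceig n J a 0 /\ a < 0).

Definition non_hyperbolic n F p : Prop :=
  equilibrium n F p /\ exists J, is_jacobian n F p J /\
    exists b, is_ceig n J 0 b.

(** System (ast): coordinates 0 = x, 1 = y, 2 = z, 3 = phi.
    V1 = V', chi1 = chi'. *)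
Definition sysF (gamma : R) (V1 chi chi1 : R -> R) (p : nat -> R) : nat -> R :=
  let x := p 0%nat in let y := p 1%nat in let z := p 2%nat in let phi := p 3%nat in
  fun i => match i with
  | 0%nat => / 2 * x * (2 * y ^ 2 + gamma * z ^ 2)
  | 1%nat => y ^ 3 + / 2 * (gamma * z ^ 2 - 2) * y - x ^ 2 * V1 phi / (3 * sqrt 6)
             + (4 - 3 * gamma) * z ^ 2 / (2 * sqrt 6) * (chi1 phi / chi phi)
  | 2%nat => / 2 * z * (2 * y ^ 2 + (z ^ 2 - 1) * gamma)
             - (4 - 3 * gamma) * y * z / (2 * sqrt 6) * (chi1 phi / chi phi)
  | _ => sqrt (2 / 3) * y
  end.

Definition sysG (gamma : R) (chi chi1 : R -> R) (q : nat -> R) : nat -> R :=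
  let y := q 0%nat in let phi := q 1%nat in
  fun i => match i with
  | 0%nat => / 2 * (1 - y ^ 2) *
             (y * (gamma - 2) + (4 - 3 * gamma) / sqrt 6 * (chi1 phi / chi phi))
  | _ => sqrt (2 / 3) * y
  end.

Definition Delta1 (gamma : R) := (gamma - 2) / 4.
Definition Delta2 (gamma : R) := (4 - 3 * gamma) / 6.

Definition pt4 (x y z phi : R) : nat -> R :=
  fun i => match i with 0%nat => x | 1%nat => y | 2%nat => z | _ => phi end.
Definition pt2 (y phi : R) : nat -> R :=
  fun i => match i with 0%nat => y | _ => phi end.

(* Main.v *)
Require Import Defs.
From Stdlib Require Import Reals Lra Lia.
Open Scope R_scope.

Lemma D_const c x : derivable_pt_lim (fun _ => c) x 0.
Proof. apply derivable_pt_lim_const. Qed.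
Lemma D_id x : derivable_pt_lim (fun t => t) x 1.
Proof. apply derivable_pt_lim_id. Qed.
Lemma D_plus f g x a b : derivable_pt_lim f x a -> derivable_pt_lim g x b ->
  derivable_pt_lim (fun t => f t + g t) x (a + b).
Proof. intros; exact (derivable_pt_lim_plus f g x a b H H0). Qed.
Lemma D_minus f g x a b : derivable_pt_lim f x a -> derivable_pt_lim g x b ->
  derivable_pt_lim (fun t => f t - g t) x (a - b).
Proof. intros; exact (derivable_pt_lim_minus f g x a b H H0). Qed.
Lemma D_mult f g x a b : derivable_pt_lim f x a -> derivable_pt_lim g x b ->
  derivable_pt_lim (fun t => f t * g t) x (a * g x + f x * b).
Proof. intros; exact (derivable_pt_lim_mult f g x a b H H0). Qed.
Lemma D_opp f x a : derivable_pt_lim f x a ->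
  derivable_pt_lim (fun t => - f t) x (- a).
Proof. intros; exact (derivable_pt_lim_opp f x a H). Qed.
Lemma D_divc f c x a : derivable_pt_lim f x a ->
  derivable_pt_lim (fun t => f t / c) x (a * / c).
Proof. intros. unfold Rdiv.
 replace (a * / c) with (a * / c + f x * 0) by ring.
 apply (D_mult f (fun _ => / c)); auto. apply D_const. Qed.
Lemma D_div f g x a b : derivable_pt_lim f x a -> derivable_pt_lim g x b -> g x <> 0 ->
  derivable_pt_lim (fun t => f t / g t) x ((a * g x - b * f x) / (g x)²).
Proof. intros; exact (derivable_pt_lim_div f g x a b H H0 H1). Qed.
Lemma D_pow f n x a : derivable_pt_lim f x a ->
  derivable_pt_lim (fun t => f t ^ n) x (INR n * f x ^ pred n * a).
Proof. intros.
 exact (derivable_pt_lim_comp f (fun y => y ^ n) x a _ H (derivable_pt_lim_pow (f x) n)).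
Qed.
Lemma D_eq f x l l' : derivable_pt_lim f x l' -> l' = l -> derivable_pt_lim f x l.
Proof. intros H ->; exact H. Qed.

Ltac der :=
  first [ apply D_const | apply D_id |
  match goal with
  | |- derivable_pt_lim (fun t => @?A t + @?B t) _ _ => apply (D_plus A B); der
  | |- derivable_pt_lim (fun t => @?A t - @?B t) _ _ => apply (D_minus A B); der
  | |- derivable_pt_lim (fun t => - @?A t) _ _ => apply (D_opp A); der
  | |- derivable_pt_lim (fun t => @?A t * @?B t) _ _ => apply (D_mult A B); der
  | |- derivable_pt_lim (fun t => @?A t / @?B t) _ _ =>
       first [ apply (D_divc A); der | apply (D_div A B); [der|der|] ]
  | |- derivable_pt_lim (fun t => @?A t ^ ?n) _ _ => apply (D_pow A); der
  | |- derivable_pt_lim _ _ _ =>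
      match goal with H : forall t, derivable_pt_lim _ t (@?L t) |- _ => apply H end
  end ].

Lemma sqrt6_pos : 0 < sqrt 6.
Proof. apply sqrt_lt_R0; lra. Qed.

Definition J4 (gamma c ch : R) (i j : nat) : R :=
  match i, j with
  | 0%nat, 0%nat => gamma / 2
  | 1%nat, 1%nat => (gamma - 2) / 2
  | 1%nat, 3%nat => (4 - 3 * gamma) / (2 * sqrt 6) * (c / ch)
  | 2%nat, 2%nat => gamma
  | 3%nat, 1%nat => sqrt (2 / 3)
  | _, _ => 0
  end.

Lemma jac4 (gamma : R) (V1 V2 chi chi1 chi2 : R -> R) phi1 :
  (forall t, derivable_pt_lim V1 t (V2 t)) ->
  (forall t, derivable_pt_lim chi t (chi1 t)) ->
  (forall t, derivable_pt_lim chi1 t (chi2 t)) ->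
  (forall t, 0 < chi t) -> chi1 phi1 = 0 ->
  is_jacobian 4 (sysF gamma V1 chi chi1) (pt4 0 0 1 phi1) (J4 gamma (chi2 phi1) (chi phi1)).
Proof.
  intros dV dchi dchi1 pos e i j Hi Hj.
  assert (hc := pos phi1). assert (h6 := sqrt6_pos).
  destruct i as [|[|[|[|i]]]]; try lia; destruct j as [|[|[|[|j]]]]; try lia;
  cbv [sysF upd pt4 J4 Nat.eqb];
  (eapply D_eq; [der| ]); try (apply Rgt_not_eq, pos);
  simpl; try rewrite e; unfold Rsqr; field; lra.
Qed.


Definition J2 (gamma c ch : R) (i j : nat) : R :=
  match i, j with
  | 0%nat, 0%nat => (gamma - 2) / 2
  | 0%nat, 1%nat => (4 - 3 * gamma) / (2 * sqrt 6) * (c / ch)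
  | 1%nat, 0%nat => sqrt (2 / 3)
  | _, _ => 0
  end.

Lemma jac2 (gamma : R) (chi chi1 chi2 : R -> R) phi1 :
  (forall t, derivable_pt_lim chi t (chi1 t)) ->
  (forall t, derivable_pt_lim chi1 t (chi2 t)) ->
  (forall t, 0 < chi t) -> chi1 phi1 = 0 ->
  is_jacobian 2 (sysG gamma chi chi1) (pt2 0 phi1) (J2 gamma (chi2 phi1) (chi phi1)).
Proof.
  intros dchi dchi1 pos e i j Hi Hj.
  assert (hc := pos phi1). assert (h6 := sqrt6_pos).
  destruct i as [|[|i]]; try lia; destruct j as [|[|j]]; try lia;
  cbv [sysG upd pt2 J2 Nat.eqb];
  (eapply D_eq; [der| ]); try (apply Rgt_not_eq, pos);
  simpl; try rewrite e; unfold Rsqr; field; lra.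
Qed.

Lemma sq0 R I x y : R * x - I * y = 0 -> R * y + I * x = 0 -> (R*R + I*I) * x = 0.
Proof. intros h1 h2.
 replace ((R*R+I*I)*x) with (R*(R*x - I*y) + I*(R*y + I*x)) by ring.
 rewrite h1, h2; ring. Qed.

Lemma sumsq0 R I : R*R + I*I = 0 -> R = 0 /\ I = 0.
Proof. intros. split; nra. Qed.

Lemma prod0 A x : A * x = 0 -> x <> 0 -> A = 0.
Proof. intros h hx. destruct (Rmult_integral _ _ h); auto; contradiction. Qed.

Lemma scalar_eig m a b u w : m * u = a * u - b * w -> m * w = b * u + a * w ->
  (u <> 0 \/ w <> 0) -> a = m /\ b = 0.
Proof.
  intros h1 h2 hn.
  assert (k1 : ((m-a)*(m-a) + b*b) * u = 0) by (apply (sq0 _ _ _ (-w)); lra).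
  assert (k2 : ((m-a)*(m-a) + b*b) * w = 0) by (apply (sq0 _ _ _ u); lra).
  assert (Z : (m-a)*(m-a) + b*b = 0).
  { destruct hn as [h|h]; [exact (prod0 _ _ k1 h)|exact (prod0 _ _ k2 h)]. }
  apply sumsq0 in Z. lra.
Qed.

Lemma block_fwd al be de a b u1 w1 u3 w3 :
  al * u1 + be * u3 = a * u1 - b * w1 -> al * w1 + be * w3 = b * u1 + a * w1 ->
  de * u1 = a * u3 - b * w3 -> de * w1 = b * u3 + a * w3 ->
  (u1 <> 0 \/ w1 <> 0 \/ u3 <> 0 \/ w3 <> 0) ->
  a^2 - b^2 - al * a - be * de = 0 /\ 2 * a * b - al * b = 0.
Proof.
  intros h1 h2 h3 h4 hn.
  set (E1r := al * u1 + be * u3 - (a * u1 - b * w1)).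
  set (E1i := al * w1 + be * w3 - (b * u1 + a * w1)).
  set (E3r := de * u1 - (a * u3 - b * w3)).
  set (E3i := de * w1 - (b * u3 + a * w3)).
  assert (z1 : E1r = 0) by (unfold E1r; lra).
  assert (z2 : E1i = 0) by (unfold E1i; lra).
  assert (z3 : E3r = 0) by (unfold E3r; lra).
  assert (z4 : E3i = 0) by (unfold E3i; lra).
  set (R := a^2 - b^2 - al * a - be * de).
  set (I := 2 * a * b - al * b).
  assert (q1 : R * u1 - I * w1 = 0).
  { replace (R * u1 - I * w1) with (-(a * E1r - b * E1i) - be * E3r)
      by (unfold R, I, E1r, E1i, E3r; ring).
    rewrite z1, z2, z3; ring. }
  assert (q2 : R * w1 + I * u1 = 0).
  { replace (R * w1 + I * u1) with (-(a * E1i + b * E1r) - be * E3i)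
      by (unfold R, I, E1r, E1i, E3i; ring).
    rewrite z1, z2, z4; ring. }
  assert (q3 : R * u3 - I * w3 = 0).
  { replace (R * u3 - I * w3) with (- de * E1r + (al - a) * E3r + b * E3i)
      by (unfold R, I, E1r, E3r, E3i; ring).
    rewrite z1, z3, z4; ring. }
  assert (q4 : R * w3 + I * u3 = 0).
  { replace (R * w3 + I * u3) with (- de * E1i + (al - a) * E3i - b * E3r)
      by (unfold R, I, E1i, E3r, E3i; ring).
    rewrite z2, z3, z4; ring. }
  assert (Z : R * R + I * I = 0).
  { destruct hn as [h|[h|[h|h]]]; eapply prod0; try exact h.
    - apply (sq0 _ _ _ w1); auto.
    - apply (sq0 _ _ _ (-u1)); lra.
    - apply (sq0 _ _ _ w3); auto.
    - apply (sq0 _ _ _ (-u3)); lra. }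
  apply sumsq0 in Z. exact Z.
Qed.

Lemma quad D1 K a b :
  (a^2 - b^2 - 2 * D1 * a - K = 0 /\ 2 * a * b - 2 * D1 * b = 0) <->
  ((a = D1 + fst (csqrt (D1 ^ 2 + K)) /\ b = snd (csqrt (D1 ^ 2 + K))) \/
   (a = D1 - fst (csqrt (D1 ^ 2 + K)) /\ b = - snd (csqrt (D1 ^ 2 + K)))).
Proof.
  unfold csqrt. destruct (Rle_dec 0 (D1^2 + K)) as [hD|hD]; cbn [fst snd].
  - pose proof (sqrt_sqrt _ hD) as hs. pose proof (sqrt_pos (D1^2+K)).
    split.
    + intros [h1 h2].
      assert (hb : b = 0).
      { destruct (Req_dec b 0) as [|nb]; auto.
        assert (a = D1) by (assert (hh : 2*(a-D1)*b = 0) by nra; pose proof (prod0 _ _ hh nb); lra). subst a.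
        nra. }
      subst b.
      assert ((a - D1 - sqrt (D1^2+K)) * (a - D1 + sqrt (D1^2+K)) = 0) by nra.
      destruct (Rmult_integral _ _ H0); [left|right]; split; lra.
    + intros [[-> ->]|[-> ->]]; split; nra.
  - apply Rnot_le_lt in hD.
    assert (hp : 0 <= - (D1^2+K)) by lra.
    pose proof (sqrt_sqrt _ hp) as hs. pose proof (sqrt_pos (-(D1^2+K))).
    split.
    + intros [h1 h2].
      destruct (Req_dec b 0) as [hb|nb].
      * subst b. exfalso. pose proof (pow2_ge_0 (a-D1)); nra.
      * assert (a = D1) by (assert (hh : 2*(a-D1)*b = 0) by nra; pose proof (prod0 _ _ hh nb); lra). subst a.
        assert ((b - sqrt (-(D1^2+K))) * (b + sqrt (-(D1^2+K))) = 0) by nra.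
        destruct (Rmult_integral _ _ H0); [left|right]; split; lra.
    + intros [[-> ->]|[-> ->]]; split; nra.
Qed.

Lemma sqrt23 : sqrt (2/3) = 2 / sqrt 6.
Proof.
  assert (h6 := sqrt6_pos).
  assert (e : sqrt (2/3) * sqrt 6 = 2).
  { rewrite <- sqrt_mult by lra. replace (2/3*6) with (2*2) by field.
    rewrite sqrt_square; lra. }
  replace (2 / sqrt 6) with (sqrt (2/3) * sqrt 6 / sqrt 6) by (rewrite e; reflexivity).
  field. lra.
Qed.

Lemma de_pos : 0 < sqrt (2/3).
Proof. apply sqrt_lt_R0; lra. Qed.

Lemma bd gamma c ch : ch <> 0 ->
  (4 - 3 * gamma) / (2 * sqrt 6) * (c / ch) * sqrt (2/3) = Delta2 gamma * c / ch.
Proof.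
  intros hc. assert (h6 := sqrt6_pos). pose proof (sqrt_sqrt 6 ltac:(lra)) as s6.
  rewrite sqrt23. unfold Delta2.
  replace ((4 - 3 * gamma) / (2 * sqrt 6) * (c / ch) * (2 / sqrt 6)) with
    ((4 - 3 * gamma) * c / ch / (sqrt 6 * sqrt 6)) by (field; lra).
  rewrite s6. field; lra.
Qed.

Definition QC gamma c ch a b :=
  let s := csqrt (Delta1 gamma ^ 2 + Delta2 gamma * c / ch) in
  (a = Delta1 gamma + fst s /\ b = snd s) \/ (a = Delta1 gamma - fst s /\ b = - snd s).

Lemma qc_iff gamma c ch a b : ch <> 0 ->
  (a^2 - b^2 - (gamma - 2)/2 * a - (4 - 3 * gamma) / (2 * sqrt 6) * (c / ch) * sqrt (2/3) = 0
   /\ 2 * a * b - (gamma-2)/2 * b = 0) <-> QC gamma c ch a b.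
Proof.
  intros hc. unfold QC. rewrite <- quad. rewrite bd by exact hc. unfold Delta1.
  split; intros [h1 h2]; split; lra.
Qed.

Lemma eig2 gamma c ch : ch <> 0 -> forall a b,
  is_ceig 2 (J2 gamma c ch) a b <-> QC gamma c ch a b.
Proof.
  intros hc a b. rewrite <- qc_iff by exact hc.
  pose proof de_pos as hde.
  split.
  - intros [u [w [[k [hk hnz]] H]]].
    destruct (H 0%nat ltac:(lia)) as [r0 i0].
    destruct (H 1%nat ltac:(lia)) as [r1 i1].
    cbv [fsum J2] in r0, i0, r1, i1.
    eapply (block_fwd _ _ _ a b (u 0%nat) (w 0%nat) (u 1%nat) (w 1%nat)); try lra.
    destruct k as [|[|k]]; try lia; try tauto.
  - intros [h1 h2].
    exists (fun k => match k with 0%nat => a | _ => sqrt (2/3) end).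
    exists (fun k => match k with 0%nat => b | _ => 0 end).
    split.
    + exists 1%nat. split; [lia|]. left. lra.
    + intros i hi. destruct i as [|[|i]]; try lia; cbv [fsum J2]; split; nra.
Qed.

Lemma eig4 gamma c ch : ch <> 0 -> forall a b,
  is_ceig 4 (J4 gamma c ch) a b <->
  ((a = gamma / 2 /\ b = 0) \/ (a = gamma /\ b = 0) \/ QC gamma c ch a b).
Proof.
  intros hc a b. rewrite <- qc_iff by exact hc.
  pose proof de_pos as hde.
  split.
  - intros [u [w [[k [hk hnz]] H]]].
    destruct (H 0%nat ltac:(lia)) as [r0 i0].
    destruct (H 1%nat ltac:(lia)) as [r1 i1].
    destruct (H 2%nat ltac:(lia)) as [r2 i2].
    destruct (H 3%nat ltac:(lia)) as [r3 i3].
    cbv [fsum J4] in r0, i0, r1, i1, r2, i2, r3, i3.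
    destruct k as [|[|[|[|k]]]]; try lia.
    + left. apply (scalar_eig (gamma/2) a b (u 0%nat) (w 0%nat)); lra.
    + right; right.
      eapply (block_fwd _ _ _ a b (u 1%nat) (w 1%nat) (u 3%nat) (w 3%nat)); try lra; try tauto.
    + right; left. apply (scalar_eig gamma a b (u 2%nat) (w 2%nat)); lra.
    + right; right.
      eapply (block_fwd _ _ _ a b (u 1%nat) (w 1%nat) (u 3%nat) (w 3%nat)); try lra; try tauto.
  - intros [[-> ->]|[[-> ->]|[h1 h2]]].
    + exists (fun k => match k with 0%nat => 1 | _ => 0 end), (fun _ => 0).
      split.
      * exists 0%nat. split; [lia|]. left. lra.
      * intros i hi. destruct i as [|[|[|[|i]]]]; try lia; cbv [fsum J4]; split; lra.
    + exists (fun k => match k with 2%nat => 1 | _ => 0 end), (fun _ => 0).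
      split.
      * exists 2%nat. split; [lia|]. left. lra.
      * intros i hi. destruct i as [|[|[|[|i]]]]; try lia; cbv [fsum J4]; split; lra.
    + exists (fun k => match k with 1%nat => a | 3%nat => sqrt (2/3) | _ => 0 end).
      exists (fun k => match k with 1%nat => b | _ => 0 end).
      split.
      * exists 3%nat. split; [lia|]. left. lra.
      * intros i hi. destruct i as [|[|[|[|i]]]]; try lia; cbv [fsum J4]; split; nra.
Qed.

Lemma qc_cases D1 K a b :
  let s := csqrt (D1 ^ 2 + K) in
  ((a = D1 + fst s /\ b = snd s) \/ (a = D1 - fst s /\ b = - snd s)) ->
  (D1 ^ 2 + K < 0 /\ a = D1 /\ b * b = - (D1^2 + K)) \/
  (0 <= D1 ^ 2 + K /\ b = 0 /\ (a - D1) * (a - D1) = D1^2 + K /\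
     (a = D1 + sqrt (D1^2+K) \/ a = D1 - sqrt (D1^2+K))).
Proof.
  intros s. unfold s, csqrt. destruct (Rle_dec 0 (D1^2 + K)) as [hD|hD]; cbn [fst snd].
  - pose proof (sqrt_sqrt _ hD) as hs. intros [[-> ->]|[-> ->]]; right;
    (split; [lra|split; [lra|split; [transitivity (sqrt (D1^2+K) * sqrt (D1^2+K)); [ring|exact hs]| ]]]); [left|right]; lra.
  - apply Rnot_le_lt in hD. assert (hp : 0 <= - (D1^2+K)) by lra.
    pose proof (sqrt_sqrt _ hp) as hs. intros [[-> ->]|[-> ->]]; left;
    (split; [lra|split; [lra|transitivity (sqrt (-(D1^2+K)) * sqrt (-(D1^2+K))); [ring|exact hs]]]).
Qed.

Lemma focus_cls D1 K a b : D1 < 0 -> D1 ^ 2 + K < 0 ->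
  let s := csqrt (D1 ^ 2 + K) in
  ((a = D1 + fst s /\ b = snd s) \/ (a = D1 - fst s /\ b = - snd s)) -> a < 0.
Proof.
  intros h1 h2 s H. destruct (qc_cases _ _ _ _ H) as [[_ [-> _]]|[h _]]; lra.
Qed.

Lemma focus_ex D1 K : D1 ^ 2 + K < 0 ->
  let s := csqrt (D1 ^ 2 + K) in
  exists a b, ((a = D1 + fst s /\ b = snd s) \/ (a = D1 - fst s /\ b = - snd s)) /\ b <> 0.
Proof.
  intros h s. exists (D1 + fst s), (snd s). split; [left; split; reflexivity|].
  unfold s, csqrt. destruct (Rle_dec 0 (D1^2 + K)) as [hD|hD]; [lra|]. cbn [snd].
  apply Rgt_not_eq. apply sqrt_lt_R0. lra.
Qed.

Lemma node_cls D1 K a b : D1 < 0 -> 0 <= D1 ^ 2 + K -> K < 0 ->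
  let s := csqrt (D1 ^ 2 + K) in
  ((a = D1 + fst s /\ b = snd s) \/ (a = D1 - fst s /\ b = - snd s)) -> b = 0 /\ a < 0.
Proof.
  intros h1 h2 h3 s H. destruct (qc_cases _ _ _ _ H) as [[h _]|[_ [hb [_ ha]]]]; [lra|].
  split; [exact hb|].
  pose proof (sqrt_sqrt _ h2). pose proof (sqrt_pos (D1^2+K)).
  assert (sqrt (D1^2+K) < - D1) by nra.
  destruct ha; lra.
Qed.

Lemma saddle_cls D1 K a b : D1 < 0 -> 0 < K ->
  let s := csqrt (D1 ^ 2 + K) in
  ((a = D1 + fst s /\ b = snd s) \/ (a = D1 - fst s /\ b = - snd s)) -> b = 0 /\ a <> 0.
Proof.
  intros h1 h3 s H. assert (h2 : 0 <= D1^2 + K) by nra.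
  destruct (qc_cases _ _ _ _ H) as [[h _]|[_ [hb [_ ha]]]]; [lra|].
  split; [exact hb|].
  pose proof (sqrt_sqrt _ h2). pose proof (sqrt_pos (D1^2+K)).
  assert (sqrt (D1^2+K) > - D1) by nra.
  destruct ha; lra.
Qed.

Lemma saddle_ex D1 K : D1 < 0 -> 0 < K ->
  let s := csqrt (D1 ^ 2 + K) in
  (exists a, ((a = D1 + fst s /\ 0 = snd s) \/ (a = D1 - fst s /\ 0 = - snd s)) /\ 0 < a) /\
  (exists a, ((a = D1 + fst s /\ 0 = snd s) \/ (a = D1 - fst s /\ 0 = - snd s)) /\ a < 0).
Proof.
  intros h1 h3 s. assert (h2 : 0 <= D1^2 + K) by nra.
  pose proof (sqrt_sqrt _ h2). pose proof (sqrt_pos (D1^2+K)).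
  assert (sqrt (D1^2+K) > - D1) by nra.
  unfold s, csqrt. destruct (Rle_dec 0 (D1^2 + K)) as [hD|hD]; [|lra]. cbn [fst snd].
  split.
  - exists (D1 + sqrt (D1^2+K)). split; [left; split; reflexivity|lra].
  - exists (D1 - sqrt (D1^2+K)). split; [right; split; [reflexivity|lra]|lra].
Qed.

Lemma nonhyp_ex D1 : D1 < 0 ->
  let s := csqrt (D1 ^ 2 + 0) in
  ((0 = D1 + fst s /\ 0 = snd s) \/ (0 = D1 - fst s /\ 0 = - snd s)).
Proof.
  intros h s. unfold s, csqrt.
  destruct (Rle_dec 0 (D1^2 + 0)) as [hD|hD]; [|nra]. cbn [fst snd].
  replace (D1^2+0) with ((-D1)*(-D1)) by ring. rewrite sqrt_square by lra.
  left; split; lra.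
Qed.

Lemma K_lt D2 c ch t : 0 < ch -> 0 < D2 -> c < - t * ch / D2 -> D2 * c / ch < - t.
Proof.
  intros hc hd h.
  assert (D2 * c < - t * ch).
  { apply (Rmult_lt_compat_l D2) in h; [|lra].
    replace (D2 * (- t * ch / D2)) with (- t * ch) in h by (field; lra). exact h. }
  apply (Rmult_lt_reg_r ch); [lra|].
  replace (D2 * c / ch * ch) with (D2 * c) by (field; lra). lra.
Qed.

Theorem mainTheorem4 :
  forall (gamma : R) (V V1 V2 V3 chi chi1 chi2 chi3 : R -> R) (phi1 : R),
    0 < gamma < 2 -> gamma <> 4 / 3 ->
    C3 V V1 V2 V3 -> (forall t, 0 <= V t) ->
    C3 chi chi1 chi2 chi3 -> (forall t, 0 < chi t) ->
    chi1 phi1 = 0 ->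
    let D1 := Delta1 gamma in
    let D2 := Delta2 gamma in
    let s := csqrt (D1 ^ 2 + D2 * chi2 phi1 / chi phi1) in
    let c := chi2 phi1 in
    let thr := - D1 ^ 2 * chi phi1 / D2 in
    (* (a) *)
    (equilibrium 4 (sysF gamma V1 chi chi1) (pt4 0 0 1 phi1) /\
     exists J, is_jacobian 4 (sysF gamma V1 chi chi1) (pt4 0 0 1 phi1) J /\
       forall a b, is_ceig 4 J a b <->
         ((a = gamma / 2 /\ b = 0) \/ (a = gamma /\ b = 0) \/
          (a = D1 + fst s /\ b = snd s) \/ (a = D1 - fst s /\ b = - snd s)))
    /\
    (* (b) *)
    (equilibrium 2 (sysG gamma chi chi1) (pt2 0 phi1) /\
     (exists J, is_jacobian 2 (sysG gamma chi chi1) (pt2 0 phi1) J /\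
       forall a b, is_ceig 2 J a b <->
         ((a = D1 + fst s /\ b = snd s) \/ (a = D1 - fst s /\ b = - snd s))) /\
     (((gamma < 4 / 3 /\ c < thr) \/ (4 / 3 < gamma /\ c > thr)) ->
        stable_focus 2 (sysG gamma chi chi1) (pt2 0 phi1)) /\
     (((gamma < 4 / 3 /\ thr <= c < 0) \/ (4 / 3 < gamma /\ 0 < c <= thr)) ->
        stable_node 2 (sysG gamma chi chi1) (pt2 0 phi1)) /\
     (((gamma < 4 / 3 /\ c > 0) \/ (4 / 3 < gamma /\ c < 0)) ->
        saddle 2 (sysG gamma chi chi1) (pt2 0 phi1)) /\
     (c = 0 -> non_hyperbolic 2 (sysG gamma chi chi1) (pt2 0 phi1))).
Proof.
  intros gamma V V1 V2 V3 chi chi1 chi2 chi3 phi1 hg hg43 hV hVpos hchi hpos e D1 D2 s c thr.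
  destruct hV as [dV [dV1 [dV2 _]]]. destruct hchi as [dchi [dchi1 _]].
  assert (hc := hpos phi1). assert (hcn : chi phi1 <> 0) by lra.
  assert (h6 := sqrt6_pos).
  assert (hD1 : D1 < 0) by (unfold D1, Delta1; lra).
  assert (EQ2 : equilibrium 2 (sysG gamma chi chi1) (pt2 0 phi1)).
  { intros i hi. destruct i as [|[|i]]; try lia; cbv [sysG pt2]; rewrite ?e; field; lra. }
  assert (E2 : forall a b, is_ceig 2 (J2 gamma (chi2 phi1) (chi phi1)) a b <->
         ((a = D1 + fst s /\ b = snd s) \/ (a = D1 - fst s /\ b = - snd s))).
  { intros a b. rewrite eig2 by exact hcn. reflexivity. }
  pose proof (jac2 gamma chi chi1 chi2 phi1 dchi dchi1 hpos e) as JAC2.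
  set (K := D2 * chi2 phi1 / chi phi1) in *.
  assert (hK : K * chi phi1 = D2 * c) by (unfold K, c; field; lra).
  assert (hthr : D2 <> 0 -> thr * D2 = - D1^2 * chi phi1) by (intro; unfold thr; field; auto).
  assert (hD2 : gamma < 4/3 -> 0 < D2) by (unfold D2, Delta2; lra).
  assert (hD2' : 4/3 < gamma -> D2 < 0) by (unfold D2, Delta2; lra).
  split.
  - split.
    + intros i hi. destruct i as [|[|[|[|i]]]]; try lia; cbv [sysF pt4]; rewrite ?e; field; lra.
    + exists (J4 gamma (chi2 phi1) (chi phi1)). split.
      * exact (jac4 gamma V1 V2 chi chi1 chi2 phi1 dV1 dchi dchi1 hpos e).
      * intros a b. rewrite eig4 by exact hcn. reflexivity.
  - split; [exact EQ2|]. split; [exists (J2 gamma (chi2 phi1) (chi phi1)); split; assumption|].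
    split; [|split; [|split]].
    + intros H. assert (hneg : D1^2 + K < 0).
      { destruct H as [[g1 h1]|[g1 h1]].
        - specialize (hD2 g1). specialize (hthr ltac:(lra)). nra.
        - specialize (hD2' g1). specialize (hthr ltac:(lra)). nra. }
      split; [exact EQ2|]. exists (J2 gamma (chi2 phi1) (chi phi1)).
      split; [exact JAC2|]. split.
      * intros a b Hab. apply E2 in Hab. exact (focus_cls D1 K a b hD1 hneg Hab).
      * destruct (focus_ex D1 K hneg) as [a [b [h1 h2]]]. exists a, b.
        split; [apply E2; exact h1|exact h2].
    + intros H. assert (hh : 0 <= D1^2 + K /\ K < 0).
      { destruct H as [[g1 h1]|[g1 h1]].
        - specialize (hD2 g1). specialize (hthr ltac:(lra)). split; nra.
        - specialize (hD2' g1). specialize (hthr ltac:(lra)). split; nra. }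
      destruct hh as [hh1 hh2].
      split; [exact EQ2|]. exists (J2 gamma (chi2 phi1) (chi phi1)).
      split; [exact JAC2|].
      intros a b Hab. apply E2 in Hab. exact (node_cls D1 K a b hD1 hh1 hh2 Hab).
    + intros H. assert (hh : 0 < K).
      { destruct H as [[g1 h1]|[g1 h1]].
        - specialize (hD2 g1). nra.
        - specialize (hD2' g1). nra. }
      split; [exact EQ2|]. exists (J2 gamma (chi2 phi1) (chi phi1)).
      split; [exact JAC2|]. split; [|split].
      * intros a b Hab. apply E2 in Hab. exact (saddle_cls D1 K a b hD1 hh Hab).
      * destruct (saddle_ex D1 K hD1 hh) as [[a [h1 h2]] _]. exists a.
        split; [apply E2; exact h1|exact h2].
      * destruct (saddle_ex D1 K hD1 hh) as [_ [a [h1 h2]]]. exists a.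
        split; [apply E2; exact h1|exact h2].
    + intros H. assert (hh : K = 0) by (unfold K; fold c; rewrite H; field; lra).
      split; [exact EQ2|]. exists (J2 gamma (chi2 phi1) (chi phi1)).
      split; [exact JAC2|]. exists 0. apply E2.
      pose proof (nonhyp_ex D1 hD1) as N. unfold s. rewrite hh. exact N.
Qed.
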